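(* Let $n\ge2$ and $\tau\in\mathbb{C}^\times$. With $\Delta$ and $\tilde\Delta$ as in the context, $$\tilde\Delta(x_1,\dots,x_{n-2}\,|\,z_1,\dots,z_n)=\prod_{j=2}^n\frac{z_j-z_1\tau^{2n-2}}{z_j-z_1\tau^2}\,\Delta(x_1,\dots,x_{n-2}\,|\,z_1,\dots,z_n)$$ as rational functions of $x_1,\dots,x_{n-2},z_1,\dots,z_n$.
   Context: For $\lambda\ge1$, $A_\lambda(x|z_1,\dots,z_n)=\sum_{\kappa=0}^{\lambda}(-1)^\kappa x^{\lambda-\kappa}\big(\tau^{n(\lambda-\kappa)+\kappa}-\tau^{-n(\lambda-\kappa)-\kappa}\big)\sigma_\kappa(z_1,\dots,z_n)$, where $\sigma_\kappa$ is the $\kappa$-th elementary symmetric polynomial ($\sigma_\kappa=0$ for $\kappa>n$); $\Delta(x_1,\dots,x_{n-2}|z_1,\dots,z_n)=\det\big(A_\lambda(x_\mu|z_1,\dots,z_n)\big)_{1\le\lambda,\mu\le n-2}$. Define $\tilde A_\lambda(x|z_1,\dots,z_n)=\frac{x-z_1\tau^{n-1}}{x-z_1\tau^{n+1}}A_\lambda(x|z_1\tau^{2n},z_2,\dots,z_n)+\frac{z_1\tau^{n+1}}{x}\Big\{\tau^{-2}\prod_{j=2}^n\frac{x\tau^{n-1}-z_j}{z_1\tau^2-z_j}-\frac{x-z_1\tau^{n-1}}{x-z_1\tau^{n+1}}\prod_{j=2}^n\frac{x\tau^{-n+1}-z_j}{z_1\tau^2-z_j}\Big\}A_\lambda(z_1\tau^{n+1}|z_1\tau^{2n},z_2,\dots,z_n)$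 and $\tilde\Delta(x_1,\dots,x_{n-2}|z_1,\dots,z_n)=\det\big(\tilde A_\lambda(x_\mu|z_1,\dots,z_n)\big)_{1\le\lambda,\mu\le n-2}$ (empty determinants equal $1$). *)

(* Defs.v *)
From HB Require Import structures.
From mathcomp Require Import all_boot all_order all_algebra.
From mathcomp Require Import complex.
From mathcomp Require Import reals.
Set Implicit Arguments. Unset Strict Implicit. Unset Printing Implicit Defensive.
Import Order.TTheory GRing.Theory Num.Theory.
Local Open Scope ring_scope.

(* Variables are 1-based: z : nat -> F with z 1, ..., z n meaningful;
   x : nat -> F with x 1, ..., x (n-2) meaningful. *)
Section Defs.
Variable F : fieldType.

Definition esym (n k : nat) (z : nat -> F) : F :=
  \sum_(S : {set 'I_n} | #|S| == k) \prod_(i in S) z i.+1.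

Definition A (n : nat) (tau : F) (lam : nat) (x : F) (z : nat -> F) : F :=
  \sum_(0 <= k < lam.+1)
     (-1) ^+ k * x ^+ (lam - k)
     * (tau ^+ (n * (lam - k) + k) - tau ^- (n * (lam - k) + k))
     * esym n k z.

Definition zshift (n : nat) (tau : F) (z : nat -> F) : nat -> F :=
  fun i => if i == 1%N then z 1%N * tau ^+ (2 * n) else z i.

Definition Atilde (n : nat) (tau : F) (lam : nat) (x : F) (z : nat -> F) : F :=
  let z1 := z 1%N in
  let r := (x - z1 * tau ^+ (n - 1)) / (x - z1 * tau ^+ n.+1) in
  r * A n tau lam x (zshift n tau z)
  + z1 * tau ^+ n.+1 / x *
    (tau ^- 2 * \prod_(2 <= j < n.+1) ((x * tau ^+ (n - 1) - z j) / (z1 * tau ^+ 2 - z j))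
     - r * \prod_(2 <= j < n.+1) ((x * tau ^- (n - 1) - z j) / (z1 * tau ^+ 2 - z j)))
    * A n tau lam (z1 * tau ^+ n.+1) (zshift n tau z).

Definition Delta (n : nat) (tau : F) (x z : nat -> F) : F :=
  \det (\matrix_(i < n - 2, j < n - 2) A n tau i.+1 (x j.+1) z).

Definition Deltatilde (n : nat) (tau : F) (x z : nat -> F) : F :=
  \det (\matrix_(i < n - 2, j < n - 2) Atilde n tau i.+1 (x j.+1) z).
End Defs.

(* Main.v *)
Set Warnings "-notation-overridden,-ambiguous-paths".
Require Import Defs.
From HB Require Import structures.
From mathcomp Require Import all_boot all_order all_algebra.
From mathcomp Require Import complex.
From mathcomp Require Import reals.
From mathcomp Require Import ring zify.
Import Order.TTheory GRing.Theory Num.Theory.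
Local Open Scope ring_scope.
Set Implicit Arguments. Unset Strict Implicit. Unset Printing Implicit Defensive.

Section Aux.
Variable F : fieldType.

Lemma esym0 n (z : nat -> F) : Defs.esym n 0 z = 1.
Proof.
rewrite /Defs.esym (eq_bigl (pred1 set0)) ?big_pred1_eq ?big_set0 // => S.
by rewrite /= cards_eq0.
Qed.

Lemma esym_gt n k (z : nat -> F) : (n < k)%N -> Defs.esym n k z = 0.
Proof.
move=> lt; rewrite /Defs.esym big_pred0 // => S; apply/negbTE/eqP => e.
by move: (max_card S); rewrite e card_ord leqNgt lt.
Qed.

Lemma esym_ext n k (z z' : nat -> F) :
  (forall i, (0 < i <= n)%N -> z i = z' i) -> Defs.esym n k z = Defs.esym n k z'.
Proof.
move=> H; apply: eq_bigr => S _; apply: eq_bigr => i _; apply: H.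
by rewrite ltn_ord.
Qed.

Lemma esym_coef n (z : nat -> F) k :
  (\prod_(i < n) (1 + z i.+1 *: 'X))`_k = Defs.esym n k z.
Proof.
under eq_bigr => i _ do rewrite addrC.
rewrite bigA_distr coef_sum /Defs.esym [RHS]big_mkcond /=.
apply: eq_bigr => S _.
rewrite -big_mkcond /= scaler_prodr coefZ coefXn.
by rewrite eq_sym; case: eqP => _; rewrite ?mulr1 ?mulr0.
Qed.

Lemma esym_rec n (z : nat -> F) k :
  Defs.esym n.+1 k.+1 z = Defs.esym n k.+1 (fun i => z i.+1) + z 1%N * Defs.esym n k (fun i => z i.+1).
Proof.
rewrite -!esym_coef big_ord_recl /= mulrDl mul1r coefD -scalerAl coefZ coefXM /=.
by [].
Qed.

Definition P (f : nat -> F) (y : F) (m : nat) := \sum_(k < m) f k * y ^+ (m.-1 - k).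

Lemma P0 f y : P f y 0 = 0.
Proof. by rewrite /P big_ord0. Qed.

Lemma P_rec f y m : P f y m.+1 = y * P f y m + f m.
Proof.
rewrite /P big_ord_recr /= subnn expr0 mulr1; congr (_ + _).
rewrite mulr_sumr; apply: eq_bigr => i _.
rewrite mulrCA -exprS; congr (_ * _ ^+ _).
case: i => i /= lt; case: m lt => // m lt; rewrite subSn //.
Qed.

Lemma PL (f f' : nat -> F) (c y : F) :
  f 0%N = f' 0%N -> (forall k, f k.+1 = f' k.+1 - c * f' k) ->
  forall m, P f y m.+1 = P f' y m.+1 - c * P f' y m.
Proof.
move=> H0 HS; elim=> [|m IH].
  by rewrite !P_rec !P0 H0 !mulr0 !add0r subr0.
rewrite P_rec IH HS [P f' y m.+2]P_rec [P f' y m.+1]P_rec; ring.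
Qed.

Lemma vieta m (w : nat -> F) y :
  \prod_(i < m) (y - w i.+1) = P (fun k => (-1) ^+ k * Defs.esym m k w) y m.+1.
Proof.
elim: m w => [|m IH] w.
  by rewrite big_ord0 /P big_ord1 esym0 !expr0 !mulr1.
rewrite big_ord_recl /=.
rewrite (IH (fun j => w j.+1)).
set f' := fun k => (-1) ^+ k * Defs.esym m k (fun j => w j.+1).
rewrite (PL (f := fun k => (-1) ^+ k * Defs.esym m.+1 k w) (f' := f') (c := w 1%N)).
- rewrite [P f' y m.+2]P_rec /f' esym_gt //; ring.
- by rewrite /f' !esym0.
- by move=> k; rewrite /f' esym_rec exprS; ring.
Qed.

Lemma A_P n' tau lam x (z : nat -> F) :
  A n'.+1 tau lam x z =
    P (fun k => (-1) ^+ k * Defs.esym n'.+1 k z * tau ^+ k) (x * tau ^+ n'.+1) lam.+1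
  - P (fun k => (-1) ^+ k * Defs.esym n'.+1 k z * tau^-1 ^+ k) (x * tau^-1 ^+ n'.+1) lam.+1.
Proof.
rewrite /A big_mkord /P -sumrB; apply: eq_bigr => k _.
rewrite -exprVn !(exprD _ (n'.+1 * _)) !exprM !exprMn -/(lam.+1.-1) /=; ring.
Qed.

Lemma A_V n' tau lam x (z z' : nat -> F) (c : F) :
  z' 1%N = c -> (forall i, (1 < i)%N -> z' i = z i) ->
  let V s m := P (fun k => (-1) ^+ k * Defs.esym n' k (fun i => z i.+1) * s ^+ k)
                 (x * s ^+ n'.+1) m in
  A n'.+1 tau lam x z' = (V tau lam.+1 - c * tau * V tau lam)
                        - (V tau^-1 lam.+1 - c * tau^-1 * V tau^-1 lam).
Proof.
move=> Hc Hz V; rewrite A_P.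
have Hs s : P (fun k => (-1) ^+ k * Defs.esym n'.+1 k z' * s ^+ k) (x * s ^+ n'.+1) lam.+1
   = V s lam.+1 - c * s * V s lam.
  apply: PL; first by rewrite !esym0.
  move=> k; rewrite esym_rec Hc.
  rewrite (@esym_ext _ _ (fun i => z' i.+1) (fun i => z i.+1)); last first.
    by move=> i /andP [i0 _]; apply: Hz.
  rewrite (@esym_ext _ k (fun i => z' i.+1) (fun i => z i.+1)); last first.
    by move=> i /andP [i0 _]; apply: Hz.
  rewrite !exprS; ring.
by rewrite !Hs.
Qed.

End Aux.

Lemma det1rk (R : comNzRingType) m (u : 'cV[R]_m) (v : 'rV[R]_m) :
  \det (1%:M + u *m v) = 1 + (v *m u) 0 0.
Proof.
set Y : 'M_(m + 1) := block_mx 1%:M u (- v) 1%:M.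
have e1 : Y *m block_mx 1%:M (- u) 0 1%:M = block_mx 1%:M 0 (- v) (1%:M + v *m u).
  rewrite mulmx_block ?mul1mx ?mulmx1 ?mulmx0 ?mul0mx ?addr0 ?add0r ?mulmxN ?mulNmx ?opprK.
  by rewrite addNr [v *m u + _]addrC.
have e2 : block_mx 1%:M (- u) 0 1%:M *m Y = block_mx (1%:M + u *m v) 0 (- v) 1%:M.
  rewrite mulmx_block ?mul1mx ?mulmx1 ?mulmx0 ?mul0mx ?addr0 ?add0r ?mulmxN ?mulNmx ?opprK.
  by rewrite subrr.
have d : \det (block_mx 1%:M (- u) 0 1%:M : 'M_(m + 1)) = 1.
  by rewrite det_ublock !det1 mulr1.
have := congr1 determinant e2; rewrite det_mulmx d mul1r det_lblock det1 mulr1 => <-.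
have := congr1 determinant e1; rewrite det_mulmx d mulr1 det_lblock det1 mul1r => ->.
by rewrite det_mx11 !mxE eqxx mulr1n.
Qed.

Lemma shiftL {R : comNzRingType} N (f : nat -> R) c (i : 'I_N) : f 0%N = 0 ->
  \sum_(j < N) ((i == j)%:R - c * (i == j.+1 :> nat)%:R) * f j.+1 = f i.+1 - c * f i.
Proof.
move=> f0.
rewrite (eq_bigr (fun j : 'I_N => (i == j)%:R * f j.+1 - c * ((i == j.+1 :> nat)%:R * f j.+1))); last first.
  by move=> j _; rewrite mulrBl mulrA.
rewrite sumrB -mulr_sumr; congr (_ - c * _).
  rewrite (bigD1 i) //= eqxx mul1r big1 ?addr0 // => j /negbTE.
  by rewrite eq_sym => ->; rewrite mul0r.
case: i => [[|i'] Hi] /=.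
  by rewrite big1 // => j _; rewrite mul0r.
rewrite (bigD1 (Ordinal (ltnW Hi))) //= eqxx mul1r big1 ?addr0 // => j.
rewrite -val_eqE /= => /negbTE; rewrite eq_sym eqSS => ->; by rewrite mul0r.
Qed.

Lemma shiftR {R : comNzRingType} N (h : nat -> R) c (k : 'I_N) : h N = 0 ->
  \sum_(j < N) h j * ((j == k)%:R - c * (j == k.+1 :> nat)%:R) = h k - c * h k.+1.
Proof.
move=> hN.
rewrite (eq_bigr (fun j : 'I_N => (j == k)%:R * h j - c * ((j == k.+1 :> nat)%:R * h j))); last first.
  by move=> j _; ring.
rewrite sumrB -mulr_sumr; congr (_ - c * _).
  rewrite (bigD1 k) //= eqxx mul1r big1 ?addr0 // => j /negbTE ->.
  by rewrite mul0r.
case: (ltnP k.+1 N) => Hk.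
  rewrite (bigD1 (Ordinal Hk)) //= eqxx mul1r big1 ?addr0 // => j.
  by rewrite -val_eqE /= => /negbTE ->; rewrite mul0r.
have -> : k.+1 = N by apply/eqP; rewrite eqn_leq Hk ltn_ord.
rewrite hN big1 // => j _.
by rewrite (_ : (j == N :> nat) = false) ?mul0r // ltn_eqF.
Qed.

Definition Lm {R : comNzRingType} N (c : R) : 'M[R]_N :=
  \matrix_(i < N, j < N) ((i == j)%:R - c * (i == j.+1 :> nat)%:R).

Lemma detL {R : comNzRingType} N c : \det (Lm N c : 'M[R]_N) = 1.
Proof.
rewrite /Lm det_trig.
  by rewrite big1 // => i _; rewrite mxE eqxx (ltn_eqF (ltnSn i)) mulr0 subr0.
apply/is_trig_mxP => i j ij; rewrite mxE.
have -> : (i == j) = false by apply: ltn_eqF.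
have -> : (i == j.+1 :> nat) = false by apply: ltn_eqF; apply: ltnW.
by rewrite mulr0 subr0.
Qed.

Section Main.
Variables (F : fieldType) (N : nat) (tau : F) (z : nat -> F).
Hypothesis tau0 : tau != 0.
Local Notation z1 := (z 1%N).

Definition e k := Defs.esym N.+1 k (fun i => z i.+1).
Definition V s x m := P (fun k => (-1) ^+ k * e k * s ^+ k) (x * s ^+ N.+2) m.

Lemma AVz x lam : A N.+2 tau lam x z =
  (V tau x lam.+1 - z1 * tau * V tau x lam) - (V tau^-1 x lam.+1 - z1 * tau^-1 * V tau^-1 x lam).
Proof. exact: (@A_V _ N.+1 tau lam x z z z1 erefl (fun _ _ => erefl)). Qed.

Lemma AVs x lam : A N.+2 tau lam x (zshift N.+2 tau z) =
  (V tau x lam.+1 - z1 * tau ^+ (2 * N.+2) * tau * V tau x lam)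
  - (V tau^-1 x lam.+1 - z1 * tau ^+ (2 * N.+2) * tau^-1 * V tau^-1 x lam).
Proof.
have Hz : forall i, (1 < i)%N -> zshift N.+2 tau z i = z i.
  by move=> i i1; rewrite /zshift; case: eqP => // ei; rewrite ei in i1.
exact: (@A_V _ N.+1 tau lam x z (zshift N.+2 tau z) _ erefl Hz).
Qed.

Lemma Vrec s x m : V s x m.+1 = x * s ^+ N.+2 * V s x m + (-1) ^+ m * e m * s ^+ m.
Proof. exact: P_rec. Qed.

Definition a := z1 * tau ^+ N.+3.
Definition rr x := (x - z1 * tau ^+ (N.+2 - 1)) / (x - a).
Definition KK x := z1 * tau ^+ N.+3 / x *
  (tau ^- 2 * \prod_(2 <= j < N.+3) ((x * tau ^+ (N.+2 - 1) - z j) / (z1 * tau ^+ 2 - z j))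
   - rr x * \prod_(2 <= j < N.+3) ((x / tau ^+ (N.+2 - 1) - z j) / (z1 * tau ^+ 2 - z j))).

Lemma Atil_eq lam x : Atilde N.+2 tau lam x z =
  rr x * A N.+2 tau lam x (zshift N.+2 tau z) + KK x * A N.+2 tau lam a (zshift N.+2 tau z).
Proof. by []. Qed.

Definition dd m := (-1) ^+ m.+1 * (tau ^+ m.+1 * (e m.+1 + z1 * e m)
   - (tau ^+ m.+1)^-1 * (e m.+1 + z1 * tau ^+ (2 * N.+2) * e m)).

Lemma R1 m x : x != a ->
  Atilde N.+2 tau m.+1 x z - z1 * tau * Atilde N.+2 tau m x z =
  A N.+2 tau m.+1 x z - z1 * tau ^+ (2 * N.+2) / tau * A N.+2 tau m x z
  + (rr x + KK x - 1) * dd m.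
Proof.
move=> xa; rewrite !Atil_eq; set K := KK x.
rewrite !AVz !AVs !Vrec /rr /dd /a.
move: xa; rewrite /a.
rewrite !exprVn mul2n -addnn exprD.
have -> : (N.+2 - 1 = N.+1)%N by rewrite subn1.
rewrite !exprS.
set T := tau ^+ N; set pm := tau ^+ m; set sg := (-1) ^+ m.
move=> xa.
have T0 : T != 0 by rewrite expf_neq0.
have pm0 : pm != 0 by rewrite expf_neq0.
have xa' : x - z1 * (tau * (tau * (tau * T))) != 0 by rewrite subr_eq0.
field; by rewrite pm0 tau0 xa' T0.
Qed.


Definition g y := \prod_(2 <= j < N.+3) (y - z j).
Definition G0 := g (z1 * tau ^+ 2).
Definition cc k := z1 ^+ (N.+1 - k) * tau ^+ (2 * N.+1) / tau ^+ k.
Definition EE := \sum_(i < N) (-1) ^+ i.+1 * e i.+1 * (z1 * tau ^+ 2) ^+ (N - i).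

Lemma tele (f : nat -> F) M : \sum_(i < M) (f i.+1 - f i) = f M - f 0%N.
Proof. by rewrite -(big_mkord xpredT (fun i => f i.+1 - f i)) telescope_sumr. Qed.

Lemma g_P y : g y = P (fun k => (-1) ^+ k * e k) y N.+2.
Proof.
rewrite /g; change (\prod_((0 + 2)%N <= j < N.+3) (y - z j) = P (fun k => (-1) ^+ k * e k) y N.+2).
rewrite big_addn big_mkord /e -vieta.
by apply: eq_bigr => i _; rewrite addn2.
Qed.

Lemma P_scale (f : nat -> F) s y m :
  P (fun k => f k * s ^+ k) (y * s) m = s ^+ m.-1 * P f y m.
Proof.
rewrite /P mulr_sumr; apply: eq_bigr => [[k /= km]] _.
rewrite exprMn mulrCA -mulrA -exprD subnKC; first by ring.
by case: m km => // m; rewrite ltnS.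
Qed.

Lemma V1 s x : V s x 1 = 1.
Proof. by rewrite Vrec /V P0 /e esym0; ring. Qed.

Lemma gV s x : s != 0 ->
  g (x * s ^+ N.+1) = (x * s ^+ N.+2 * V s x N.+1 + (-1) ^+ N.+1 * e N.+1 * s ^+ N.+1) / s ^+ N.+1.
Proof.
move=> s0.
have HV : V s x N.+2 = s ^+ N.+1 * g (x * s ^+ N.+1).
  rewrite /V (_ : x * s ^+ N.+2 = x * s ^+ N.+1 * s); last by rewrite exprSr mulrA.
  by rewrite (P_scale (fun k => (-1) ^+ k * e k)) g_P.
by rewrite -Vrec HV [s ^+ N.+1 * _]mulrC mulfK // expf_neq0.
Qed.

Lemma G0_dec : G0 = (z1 * tau ^+ 2) ^+ N.+1 + EE + (-1) ^+ N.+1 * e N.+1.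
Proof.
rewrite /G0 g_P /P big_ord_recl big_ord_recr /= /EE subn0 subnn expr0 mulr1 /e esym0.
rewrite !mul1r addrA; congr (_ + _ + _).
Qed.

Lemma cc_rel i : (i <= N)%N -> cc i.+1 * (z1 * tau) = cc i.
Proof.
move=> iN; rewrite /cc subSS (subSn iN) !exprS.
have t0 : tau ^+ i != 0 by rewrite expf_neq0.
by field; rewrite t0 tau0.
Qed.

Lemma cc_iota i : (i <= N)%N -> cc i.+1 * tau^-1 ^+ i.+1 = (z1 * tau ^+ 2) ^+ (N - i).
Proof.
move=> iN; rewrite /cc subSS exprVn exprMn.
have -> : (2 * N.+1 = (N - i) * 2 + i.+1 * 2)%N by lia.
rewrite exprD !exprM.
have t0 : tau ^+ i.+1 != 0 by rewrite expf_neq0.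
rewrite [(tau ^+ 2) ^+ _]exprAC; by field.
Qed.


Lemma Hid x : x != 0 -> x != a -> G0 != 0 ->
  G0 * (rr x + KK x - 1) = \sum_(i < N) cc i.+1 * A N.+2 tau i.+1 x z.
Proof.
move=> x0 xa G00.
set W := \sum_(i < N) cc i.+1 * V tau^-1 x i.+1.
have Hsplit : \sum_(i < N) cc i.+1 * A N.+2 tau i.+1 x z =
  (\sum_(i < N) (cc i.+1 * V tau x i.+2 - cc i * V tau x i.+1))
  - (\sum_(i < N) cc i.+1 * V tau^-1 x i.+2
     - tau ^- 2 * \sum_(i < N) cc i * V tau^-1 x i.+1).
  rewrite mulr_sumr -!sumrB; apply: eq_bigr => i _.
  rewrite AVz -(cc_rel (ltnW (ltn_ord i))); field; exact: tau0.
have S1 : \sum_(i < N) cc i.+1 * V tau^-1 x i.+2 = x * tau^-1 ^+ N.+2 * W + EE.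
  rewrite /W /EE mulr_sumr -big_split; apply: eq_bigr => j _ /=.
  rewrite Vrec -(cc_iota (ltnW (ltn_ord j))); ring.
have S0 : \sum_(i < N) cc i * V tau^-1 x i.+1 = z1 * tau * W.
  rewrite /W mulr_sumr; apply: eq_bigr => j _.
  rewrite -(cc_rel (ltnW (ltn_ord j))); ring.
have sh : \sum_(i < N) cc i * V tau^-1 x i.+1 + cc N * V tau^-1 x N.+1
        = cc 0 * V tau^-1 x 1 + \sum_(i < N) cc i.+1 * V tau^-1 x i.+2.
  transitivity (\sum_(i < N.+1) cc i * V tau^-1 x i.+1).
    by rewrite big_ord_recr.
  by rewrite big_ord_recl.
have nz : z1 * tau - x * tau^-1 ^+ N.+2 != 0.
  have -> : z1 * tau - x * tau^-1 ^+ N.+2 = (a - x) / tau ^+ N.+2.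
    rewrite /a exprVn !exprS; field; by rewrite expf_neq0 // tau0.
  apply: mulf_neq0; rewrite ?invr_neq0 ?expf_neq0 // subr_eq0 eq_sym //.
have HW : W = (cc 0 + EE - cc N * V tau^-1 x N.+1) / (z1 * tau - x * tau^-1 ^+ N.+2).
  apply: (canRL (mulfK nz)).
  rewrite S0 S1 V1 in sh; move/(canRL (addrK _)): sh => sh.
  transitivity (z1 * tau * W - x * tau^-1 ^+ N.+2 * W); first by ring.
  rewrite sh; ring.
rewrite Hsplit (tele (fun i => cc i * V tau x i.+1)) V1 S1 S0 HW.
rewrite /rr /KK !prodf_div (_ : (N.+2 - 1)%N = N.+1) //.
rewrite -!exprVn /rr.
rewrite (_ : \prod_(2 <= i < N.+3) (x * tau ^+ N.+1 - z i) = g (x * tau ^+ N.+1)) //.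
rewrite (_ : \prod_(2 <= i < N.+3) (x * tau^-1 ^+ N.+1 - z i) = g (x * tau^-1 ^+ N.+1)) //.
rewrite (_ : \prod_(2 <= i < N.+3) (z1 * tau ^+ 2 - z i) = G0) //.
rewrite (gV _ tau0) (gV _ (invr_neq0 tau0)).
rewrite G0_dec in G00 *.
rewrite /cc subSnn subn0 expr0 divr1 mul2n -addnn exprD !exprVn.
move: xa nz G00; rewrite /a.
rewrite [(z1 * tau ^+ 2) ^+ N.+1]exprMn -exprM mulnC exprM.
rewrite !exprS ?expr0 ?mulr1 => xa nz G00.
set T := tau ^+ N; set Z := z1 ^+ N; set sN := (-1) ^+ N.
move: (V tau x N.+1) (V tau^-1 x N.+1) (e N.+1) EE G00 => Vt Vi eN EE' G00.
have T0 : T != 0 by rewrite expf_neq0.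
have xa' : x - z1 * (tau * (tau * (tau * T))) != 0 by rewrite subr_eq0.
field.
rewrite T0 tau0 x0 xa' oner_neq0 andbT /=.
apply/andP; split; last by rewrite andbT; exact: G00.
by rewrite subr_eq0 eq_sym -!mulrA.
Qed.


Definition q := tau ^+ (2 * N.+1).
Definition Gam k := \sum_(j < N.+1 - k) q ^+ j.
Definition ch k := cc k * Gam k.
Definition ph1 k := ch k * (tau ^+ k - (tau ^+ k)^-1).
Definition ph2 k := - (ch k.+1 * z1 * (tau ^+ k.+1 - (tau ^+ k.+1)^-1 * tau ^+ (2 * N.+2))).

Lemma ch0 k : (N <= k)%N -> ch k.+1 = 0.
Proof.
move=> Nk; rewrite /ch /Gam subSS.
have -> : (N - k = 0)%N by apply/eqP; rewrite subn_eq0.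
by rewrite big_ord0 mulr0.
Qed.

Lemma phk k : (k < N.+2)%N ->
  ph1 k + ph2 k = (z1 * q) ^+ (N.+1 - k) - (z1 * tau ^+ 2) ^+ (N.+1 - k).
Proof.
rewrite ltnS => kN1.
have [kN|Nk] := leqP k N; last first.
  have -> : k = N.+1 by apply/eqP; rewrite eqn_leq kN1.
  by rewrite /ph1 /ph2 ch0 // ch0 // subnn !expr0 subrr; ring.
have Gk : Gam k = 1 + q * Gam k.+1.
  rewrite /Gam subSS (subSn kN) big_ord_recl expr0 mulr_sumr; congr (_ + _).
  by apply: eq_bigr => j _; rewrite exprS.
have Gk1 : q ^+ (N - k) = Gam k.+1 * (q - 1) + 1.
  by rewrite /Gam subSS -[X in _ = X + _]mulrC -subrX1 subrK.
have P0 : tau ^+ k != 0 by rewrite expf_neq0.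
have hq' : tau ^+ (N - k).+1 * tau ^+ (N - k).+1 = q / (tau ^+ k * tau ^+ k).
  apply/(canRL (mulfK _)); first by rewrite mulf_neq0.
  by rewrite /q -!exprD; congr (_ ^+ _); lia.
have h2 : tau ^+ (2 * N.+2) = q * tau ^+ 2.
  by rewrite /q -exprD; congr (_ ^+ _); lia.
rewrite /ph1 /ph2 /ch Gk -(cc_rel kN) (subSn kN) !exprMn h2.
rewrite hq' [q ^+ _.+1]exprS Gk1 [z1 ^+ _.+1]exprS /cc subSS [tau ^+ k.+1]exprS.
rewrite -/q.
set G' := Gam k.+1; set P := tau ^+ k; set Z := z1 ^+ (N - k).
field.
by rewrite P0 tau0.
Qed.

Lemma Did : G0 + \sum_(i < N) ch i.+1 * dd i = g (z1 * q).
Proof.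
have E1 : \sum_(i < N) ch i.+1 * dd i = \sum_(k < N.+2) (-1) ^+ k * e k * (ph1 k + ph2 k).
  transitivity (\sum_(i < N) (-1) ^+ i.+1 * e i.+1 * ph1 i.+1
              + \sum_(i < N) (-1) ^+ i * e i * ph2 i).
    rewrite -big_split; apply: eq_bigr => i _.
    rewrite /dd /ph1 /ph2 exprS /=; ring.
  transitivity (\sum_(k < N.+2) ((-1) ^+ k * e k * ph1 k + (-1) ^+ k * e k * ph2 k)); last first.
    by apply: eq_bigr => k _; rewrite mulrDr.
  rewrite big_split /=; congr (_ + _).
    rewrite big_ord_recl big_ord_recr /= /ph1.
    rewrite [ch (bump 0 N)]ch0 // expr0 invr1 subrr !mulr0 add0r mul0r mulr0 addr0.
    by apply: eq_bigr.
  rewrite !big_ord_recr /= /ph2 ch0 // [ch N.+2]ch0 // !mul0r !oppr0 !mulr0 !addr0.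
  by apply: eq_bigr.
rewrite E1 /G0 !g_P /P -big_split; apply: eq_bigr => [[k /= kN]] _.
rewrite phk //; ring.
Qed.


Lemma GamS k : (k <= N)%N -> Gam k = 1 + q * Gam k.+1.
Proof.
move=> kN; rewrite /Gam subSS (subSn kN) big_ord_recl expr0 mulr_sumr; congr (_ + _).
by apply: eq_bigr => j _; rewrite exprS.
Qed.

Lemma h2 : tau ^+ (2 * N.+2) = q * tau ^+ 2.
Proof. by rewrite /q -exprD; congr (_ ^+ _); lia. Qed.

Lemma chrel k : (k < N)%N ->
  ch k.+1 - z1 * tau ^+ (2 * N.+2) / tau * ch k.+2 = cc k.+1.
Proof.
move=> kN; rewrite /ch (GamS kN) -(cc_rel kN) h2; field; exact: tau0.
Qed.

Lemma A0' y z' : A N.+2 tau 0 y z' = 0.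
Proof. by rewrite /A big_nat1 subnn muln0 !expr0 invr1 subrr mulr0 mul0r. Qed.

Lemma mainF (x : nat -> F) :
  (forall mu, (mu < N)%N -> x mu.+1 != 0 /\ x mu.+1 != a) -> G0 != 0 ->
  \det (\matrix_(i < N, j < N) Atilde N.+2 tau i.+1 (x j.+1) z)
  = g (z1 * q) / G0 * \det (\matrix_(i < N, j < N) A N.+2 tau i.+1 (x j.+1) z).
Proof.
move=> Hx G00.
set Am := \matrix_(i < N, j < N) A N.+2 tau i.+1 (x j.+1) z.
set Atm := \matrix_(i < N, j < N) Atilde N.+2 tau i.+1 (x j.+1) z.
pose dcol : 'cV[F]_N := \col_i dd i.
pose crow : 'rV[F]_N := \row_j cc j.+1.
pose hrow : 'rV[F]_N := \row_j ch j.+1.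
set al := z1 * tau.
set be := z1 * tau ^+ (2 * N.+2) / tau.
have At0 y : Atilde N.+2 tau 0 y z = 0 by rewrite Atil_eq !A0' !mulr0 addr0.
have E : Lm N al *m Atm = (Lm N be + G0^-1 *: (dcol *m crow)) *m Am.
  apply/matrixP => i mu; rewrite !mxE.
  rewrite (eq_bigr (fun j : 'I_N => ((i == j)%:R - al * (i == j.+1 :> nat)%:R)
                    * Atilde N.+2 tau j.+1 (x mu.+1) z)); last by move=> j _; rewrite !mxE.
  rewrite (shiftL (f := fun k => Atilde N.+2 tau k (x mu.+1) z)) //.
  rewrite (eq_bigr (fun j : 'I_N => ((i == j)%:R - be * (i == j.+1 :> nat)%:R)
                    * A N.+2 tau j.+1 (x mu.+1) z
                    + G0^-1 * dd i * (cc j.+1 * A N.+2 tau j.+1 (x mu.+1) z))); last first.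
    by move=> j _; rewrite !mxE big_ord1 !mxE; ring.
  rewrite big_split /= (shiftL (f := fun k => A N.+2 tau k (x mu.+1) z)) ?A0' //.
  have [x0 xa] := Hx mu (ltn_ord mu).
  rewrite -mulr_sumr -(Hid x0 xa G00) R1 //.
  rewrite /be; field; by rewrite G00 tau0.
have F3 : hrow *m Lm N be = crow.
  apply/matrixP => o k; rewrite !mxE.
  rewrite (eq_bigr (fun j : 'I_N => ch j.+1 * ((j == k)%:R - be * (j == k.+1 :> nat)%:R))); last first.
    by move=> j _; rewrite !mxE.
  rewrite (shiftR (h := fun j => ch j.+1)); last exact: ch0.
  rewrite /be; exact: chrel.
have F4 : Lm N be + G0^-1 *: (dcol *m crow) = (1%:M + (G0^-1 *: dcol) *m hrow) *m Lm N be.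
  by rewrite mulmxDl mul1mx -mulmxA F3 scalemxAl.
rewrite -[\det Atm]mul1r -(detL N al) -det_mulmx E det_mulmx F4 det_mulmx detL mulr1 det1rk.
congr (_ * _).
rewrite -scalemxAr mxE mxE -Did.
rewrite (eq_bigr (fun j : 'I_N => ch j.+1 * dd j)); last by move=> j _; rewrite !mxE.
by field.
Qed.

End Main.

Unset Implicit Arguments.

Theorem proposition4p3 (R : realType) (n : nat) (tau : R[i])
    (x z : nat -> R[i]) :
  (2 <= n)%N -> tau != 0 ->
  (forall mu, (1 <= mu <= n - 2)%N ->
     x mu != 0 /\ x mu != z 1%N * tau ^+ n.+1) ->
  (forall j, (2 <= j <= n)%N -> z j != z 1%N * tau ^+ 2) ->
  Deltatilde n tau x z
  = \prod_(2 <= j < n.+1) ((z j - z 1%N * tau ^+ (2 * n - 2)) / (z j - z 1%N * tau ^+ 2))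
    * Delta n tau x z.
Proof.
move=> n2 tau0 Hx Hz.
rewrite /Deltatilde /Delta.
have en : n = (n - 2)%N.+2 by rewrite -addn2 subnK.
move: (n - 2)%N en Hx => N en Hx; subst n.
have G00 : G0 N tau z != 0.
  rewrite /G0 /g big_seq; apply: (big_rec (fun v : R[i] => v != 0)) => [|j v]; first exact: oner_neq0.
  rewrite mem_index_iota => /andP [j2 jn] v0.
  rewrite mulf_neq0 // subr_eq0 eq_sym; apply: Hz; rewrite j2 -ltnS jn.
  by [].
have Hx' : forall mu, (mu < N)%N -> x mu.+1 != 0 /\ x mu.+1 != a N tau z.
  by move=> mu muN; apply: Hx; rewrite ltnS leq0n.
rewrite (mainF tau0 Hx' G00); congr (_ * _).
rewrite (_ : (2 * N.+2 - 2 = 2 * N.+1)%N); last by lia.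
rewrite /g /G0 /g /q -prodf_div.
apply: eq_bigr => j _.
by rewrite -(opprB (z j)) -(opprB (z j) (z 1%N * tau ^+ 2)) invrN mulrNN.
Qed.
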